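(* Let $h:(0,\infty)\to\mathbb{R}$ be a differentiable, monotonically increasing (non-decreasing) function satisfying $h(1/t)\ge \frac{1}{t}\,h'(1/t)$ for all $t>0$, where $h'$ denotes the derivative of $h$. Define $g(t)=\min\{h(t),\,t\,h(1/t)\}$ for $t>0$. Then $g$ is monotonically increasing on $(0,\infty)$, i.e. $g(t_1)\ge g(t_2)$ whenever $t_1\ge t_2>0$.
   Context: Here $h$ plays the role of a parametrized function $h_{\boldsymbol{\theta}}$ (for a fixed parameter $\boldsymbol{\theta}$) and $g$ that of $g_{\boldsymbol{\theta}}$. *)

(* Defs.v *)
From Stdlib Require Import Reals.
From Coquelicot Require Import Coquelicot.
Open Scope R_scope.

Definition g_of (h : R -> R) (t : R) : R := Rmin (h t) (t * h (/ t)).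

(* Main.v *)
Require Import Defs.
From Stdlib Require Import Reals Lra.
From Coquelicot Require Import Coquelicot.
Open Scope R_scope.

Theorem theorem3 (h : R -> R)
  (hdiff : forall t, 0 < t -> ex_derive h t)
  (hmono : forall t1 t2, 0 < t2 -> t2 <= t1 -> h t2 <= h t1)
  (hcond : forall t, 0 < t -> h (/ t) >= / t * Derive h (/ t)) :
  forall t1 t2, 0 < t2 -> t2 <= t1 -> g_of h t2 <= g_of h t1.
Proof.
  intros t1 t2 H2 H12.
  set (k := fun x => x * h (/ x)).
  assert (Hd : forall t, 0 < t -> is_derive k t (h (/ t) - / t * Derive h (/ t))).
  { intros t Ht. unfold k.
    assert (Hi : 0 < / t) by (apply Rinv_0_lt_compat; lra).
    destruct (hdiff _ Hi) as [d Hdd].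
    pose proof (is_derive_unique _ _ _ Hdd) as Eq.
    assert (Hr : is_derive (fun y : R => / y) t (- 1 / t ^ 2)).
    { apply (is_derive_inv (fun y => y) t 1). apply is_derive_Reals, derivable_pt_lim_id. lra. }
    assert (Hc : is_derive (fun x => h (/ x)) t (scal (- 1 / t ^ 2) d)).
    { apply (is_derive_comp h (fun y => / y) t d). exact Hdd. exact Hr. }
    pose proof (is_derive_mult (fun x => x) (fun x => h (/ x)) t 1 _ ltac:(apply is_derive_Reals, derivable_pt_lim_id) Hc
                  (fun n m => Rmult_comm n m)) as Hm.
    eapply is_derive_ext; [intro; reflexivity|].
    replace (h (/ t) - / t * Derive h (/ t)) with
      (plus (mult 1 (h (/ t))) (mult t (scal (- 1 / t ^ 2) d))).
    exact Hm.
    rewrite Eq. unfold plus, mult, scal; simpl. unfold mult; simpl. field. lra. }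
  assert (Hk : k t2 <= k t1).
  { destruct (MVT_gen k t2 t1 (fun t => h (/ t) - / t * Derive h (/ t))) as [c [Hc Heq]].
    - intros x Hx. apply Hd. rewrite Rmin_left in Hx; lra.
    - intros x Hx. rewrite Rmin_left in Hx by lra.
      apply continuity_pt_filterlim. apply (@ex_derive_continuous R_AbsRing R_NormedModule).
      eexists. apply Hd. lra.
    - rewrite Rmin_left in Hc by lra.
      assert (0 < c) by lra.
      pose proof (hcond c H).
      assert (0 <= (h (/ c) - / c * Derive h (/ c)) * (t1 - t2)).
      { apply Rmult_le_pos; lra. }
      lra. }
  unfold g_of. unfold k in Hk. pose proof (hmono t1 t2 H2 H12).
  unfold Rmin. destruct (Rle_dec (h t2) (t2 * h (/ t2)));
  destruct (Rle_dec (h t1) (t1 * h (/ t1))); lra.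
Qed.
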